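(* Let $(S,d)$ be a finite metric space partitioned into two disjoint groups $S=S_1\cup S_2$, let $k_1,k_2$ be nonnegative integers with $k=k_1+k_2$, and let $r^*$ be the optimal radius of the fair $k$-center problem. For $l\in\{1,2\}$ let $\Gamma_l\subseteq S_l$ be a $2r^*$-independent center set of $S_l$, with $|\Gamma_1|>k_1$ and $|\Gamma_2|>k_2$. Then Algorithm A (described in the context), run on $\Gamma_1,\Gamma_2$, terminates in time $O(k^2)$ and outputs a set $C$ that is a feasible solution to the fair $k$-center problem (i.e. $|C\cap S_l|\le k_l$ for $l=1,2$ and $|C|\le k$) with $d(s,C)\le 5r^*$ for every $s\in S$.
   Context: Fair $k$-center: $C\subseteq S$ is feasible if $|C\cap S_l|\le k_l$ for each $l$; cost $\max_{s\in S}d(s,C)$, $d(s,C)=\min_{c\in C}d(s,c)$, $d(s,\emptyset)=\infty$; $r^*$ is the minimum cost over feasible $C$. For $T\subseteq S$, $\Gamma\subseteq T$ is a $\lambda$-independent center set of $T$ if distinct points of $\Gamma$ are at distance $>\lambda$ and every point of $T$ is within $\lambda$ of some point of $\Gamma$. Running time counts elementary operations and distance evaluations. Algorithm A (input $\Gamma_1,\Gamma_2$). Phase 1: $C\leftarrow\emptyset$; build the bipartite graph $G$ on vertex set $\Gamma_1\cup\Gamma_2$ where $p\in\Gamma_1$, $q\in\Gamma_2$ are adjacent iff $d(p,q)\le 3r^*$; for each degree-$0$ vertex $i$, if $d(C,i)>2r^*$ add $i$ to $C$; remove all degree-$0$ vertices from $G$ (throughout, the current $\Gamma_l$ means the vertices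 of $G$ that lie in the original $\Gamma_l$). Phase 2: while $|C|\le k$ and $G$ is nonempty: if $G$ has no vertex of degree $1$, pick an arbitrary edge, let $p$ be one of its endpoints (arbitrary) and $q$ the other, add $p$ to $C$ and delete $p$ and $q$ from $G$; otherwise, pick a vertex $i$ of $G$ maximizing $|N_1(i)|$, where $N_1(i)$ is the set of degree-$1$ neighbours of $i$ in $G$, add $i$ to $C$ and delete $i$ and $N_1(i)$ from $G$. Then, if some $l\in\{1,2\}$ satisfies $|C\cap S_l|+|\Gamma_l|\le k_l$ (current $\Gamma_l$), set $C\leftarrow C\cup\Gamma_l$, let $\Gamma'_{3-l}=\{p\in\Gamma_{3-l}: d(p,C)>3r^*\}$ (current $\Gamma_{3-l}$), and return $C\cup\Gamma'_{3-l}$. If the loop ends without returning, output $C$. *)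

(* Defs.v *)
From HB Require Import structures.
From mathcomp Require Import all_boot all_order all_algebra.
From mathcomp Require Import reals.
Set Implicit Arguments. Unset Strict Implicit. Unset Printing Implicit Defensive.
Import Order.TTheory GRing.Theory Num.Theory.
Local Open Scope ring_scope.

Section FairKCenter.
Variables (R : realType) (T : finType) (d : T -> T -> R).

(* (T, d) is a (finite) metric space; the whole point set S is T. *)
Definition is_metric : Prop :=
  [/\ forall x y, 0 <= d x y,
      forall x y, d x y = 0 <-> x = y,
      forall x y, d x y = d y x
    & forall x y z, d x z <= d x y + d y z].

(* d(s, C) <= rho for every s in S  (with d(s, emptyset) = +oo),
   i.e. the k-center cost max_s d(s,C) of C is at most rho. *)
Definition covers (C : {set T}) (rho : R) : Prop :=
  forall s : T, exists2 c, c \in C & d s c <= rho.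

Variables (S1 S2 : {set T}) (k1 k2 : nat).

Definition fair_feasible (C : {set T}) : Prop :=
  (#|C :&: S1| <= k1)%N /\ (#|C :&: S2| <= k2)%N.

Definition opt_radius (r : R) : Prop :=
  (exists C, fair_feasible C /\ covers C r) /\
  (forall C r', fair_feasible C -> covers C r' -> r <= r').

End FairKCenter.

Definition indep_center_set (R : realType) (T : finType) (d : T -> T -> R)
    (lambda : R) (X Gam : {set T}) : Prop :=
  [/\ Gam \subset X,
      (forall p q, p \in Gam -> q \in Gam -> p != q -> lambda < d p q)
    & (forall x, x \in X -> exists2 p, p \in Gam & d x p <= lambda)].

(* Algorithm A as a nondeterministic small-step machine, with a cost
   counter (elementary operations + distance evaluations). *)

Inductive astate (T : finType) :=
  | Ph1 of {set T} & {set T} & nat   (* C, degree-0 vertices still to process, cost *)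
  | Ph2 of {set T} & {set T} & nat   (* C, vertex set of current graph G, cost *)
  | Done of {set T} & nat.           (* output, cost *)

Section AlgA.
Variables (R : realType) (T : finType) (d : T -> T -> R).
Variables (S1 S2 : {set T}) (k1 k2 : nat) (r : R) (G1 G2 : {set T}).

Definition Sg (l : bool) := if l then S1 else S2.
Definition Gam (l : bool) := if l then G1 else G2.
Definition kk (l : bool) := if l then k1 else k2.

Definition adj (p q : T) : bool :=
  ((p \in G1) && (q \in G2) || (p \in G2) && (q \in G1)) && (d p q <= 3 * r).

(* the current graph G is the subgraph induced by its vertex set V *)
Definition nbr (V : {set T}) (v : T) : {set T} := [set u in V | adj v u].
Definition deg1 (V : {set T}) : {set T} := [set v in V | #|nbr V v| == 1%N].
Definition N1 (V : {set T}) (i : T) : {set T} := nbr V i :&: deg1 V.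
Definition inc_edges (V X : {set T}) : nat :=
  #|[set e : T * T | [&& e.1 \in X, e.1 \in V, e.2 \in V & adj e.1 e.2]]|.

Definition V0 : {set T} := G1 :|: G2.
Definition Z0 : {set T} := [set v in V0 | nbr V0 v == set0].

Definition algA_init : astate T :=
  Ph1 set0 Z0 (#|G1| * #|G2| + #|V0| + 1)%N.

(* one iteration of the body of the Phase 2 loop: (C,V) -> (C',V') at cost m *)
Inductive body : {set T} -> {set T} -> {set T} -> {set T} -> nat -> Prop :=
  | body_edge (C V : {set T}) (p q : T) :
      deg1 V = set0 -> p \in V -> q \in V -> adj p q ->
      body C V (p |: C) (V :\: [set p; q]) (1 + inc_edges V [set p; q])%N
  | body_deg1 (C V : {set T}) (i : T) :
      deg1 V != set0 -> i \in V ->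
      (forall j, j \in V -> #|N1 V j| <= #|N1 V i|)%N ->
      body C V (i |: C) (V :\: (i |: N1 V i)) (1 + inc_edges V (i |: N1 V i))%N.

Definition ret_cond (C V : {set T}) (l : bool) : bool :=
  (#|C :&: Sg l| + #|V :&: Gam l| <= kk l)%N.

(* the returned set C u Gamma_l u Gamma'_{3-l} *)
Definition ret_set (C V : {set T}) (l : bool) : {set T} :=
  let C' := C :|: (V :&: Gam l) in
  C' :|: [set p in V :&: Gam (~~ l) | [forall c in C', 3 * r < d p c]].

Inductive algA_step : astate T -> astate T -> Prop :=
  | ph1_add (C P : {set T}) (n : nat) (i : T) :
      i \in P -> [forall c in C, 2 * r < d c i] ->
      algA_step (Ph1 C P n) (Ph1 (i |: C) (P :\ i) (n + #|C| + 1))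
  | ph1_skip (C P : {set T}) (n : nat) (i : T) :
      i \in P -> ~~ [forall c in C, 2 * r < d c i] ->
      algA_step (Ph1 C P n) (Ph1 C (P :\ i) (n + #|C| + 1))
  | ph1_end (C : {set T}) (n : nat) :
      algA_step (Ph1 C set0 n) (Ph2 C (V0 :\: Z0) (n + #|V0| + 1))
  | ph2_stop (C V : {set T}) (n : nat) :
      ~~ ((#|C| <= k1 + k2)%N && (V != set0)) ->
      algA_step (Ph2 C V n) (Done C (n + 1))
  | ph2_return (C V : {set T}) (n : nat) (C' V' : {set T}) (m : nat) (l : bool) :
      (#|C| <= k1 + k2)%N -> V != set0 -> body C V C' V' m ->
      ret_cond C' V' l ->
      algA_step (Ph2 C V n)
        (Done (ret_set C' V' l) (n + m + 1 + #|V'| * (#|C'| + #|V'| + 1)))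
  | ph2_continue (C V : {set T}) (n : nat) (C' V' : {set T}) (m : nat) :
      (#|C| <= k1 + k2)%N -> V != set0 -> body C V C' V' m ->
      ~~ ret_cond C' V' true -> ~~ ret_cond C' V' false ->
      algA_step (Ph2 C V n) (Ph2 C' V' (n + m + 1)).

End AlgA.

Inductive algA_reach (A : Type) (step : A -> A -> Prop) : A -> A -> Prop :=
  | reach_refl s : algA_reach step s s
  | reach_step s t u : step s t -> algA_reach step t u -> algA_reach step s u.

(* Main.v *)
Require Import Defs.
From HB Require Import structures.
From mathcomp Require Import all_boot all_order all_algebra.
From mathcomp Require Import reals.
From mathcomp Require Import lra zify.
Import Order.TTheory GRing.Theory Num.Theory.
Set Implicit Arguments. Unset Strict Implicit. Unset Printing Implicit Defensive.

Lemma cardsU_le (T : finType) (A B : {set T}) : (#|A :|: B| <= #|A| + #|B|)%N.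
Proof. by rewrite cardsU leq_subr. Qed.

Lemma cardD_lt (T : finType) (V X : {set T}) x :
  x \in V -> x \in X -> (#|V :\: X| < #|V|)%N.
Proof.
move=> xV xX; rewrite -(cardsID X V).
have : (0 < #|V :&: X|)%N by rewrite card_gt0; apply/set0Pn; exists x; rewrite inE xV.
lia.
Qed.

Section Pf.
Variables (R : realType) (T : finType) (d : T -> T -> R)
  (S1 S2 : {set T}) (k1 k2 : nat) (r : R) (G1 G2 : {set T}).
Hypotheses (Hm : is_metric d) (HS12 : S1 :&: S2 = set0) (HSU : S1 :|: S2 = [set: T])
  (Hopt : opt_radius d S1 S2 k1 k2 r)
  (HI1 : indep_center_set d (2 * r)%R S1 G1) (HI2 : indep_center_set d (2 * r)%R S2 G2)
  (Hk1 : (k1 < #|G1|)%N) (Hk2 : (k2 < #|G2|)%N).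

Local Notation K := (k1 + k2)%N.
Local Notation adjx := (adj d r G1 G2).
Local Notation nb := (nbr d r G1 G2).
Local Notation Z := (Z0 d r G1 G2).
Local Notation W := (V0 G1 G2).
Local Notation Gm := (Gam G1 G2).
Local Notation Sb := (Sg S1 S2).

Lemma d0 x y : (0 <= d x y)%R. Proof. by case: Hm. Qed.
Lemma dxx x : d x x = 0%R. Proof. by case: Hm => _ h _ _; apply/h. Qed.
Lemma dsym x y : d x y = d y x. Proof. by case: Hm. Qed.
Lemma dtri x y z : (d x z <= d x y + d y z)%R. Proof. by case: Hm. Qed.

Lemma S_disj x : x \in S1 -> x \in S2 -> False.
Proof. move=> h1 h2; have : x \in S1 :&: S2 by rewrite inE h1 h2.
by rewrite HS12 inE. Qed.

Lemma S_cov x : (x \in S1) || (x \in S2).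
Proof. have : x \in S1 :|: S2 by rewrite HSU inE.
by rewrite inE. Qed.

Lemma G1S x : x \in G1 -> x \in S1. Proof. by move: HI1; rewrite /indep_center_set => -[/subsetP h _ _]; apply: h. Qed.
Lemma G2S x : x \in G2 -> x \in S2. Proof. by move: HI2; rewrite /indep_center_set => -[/subsetP h _ _]; apply: h. Qed.

Lemma GmS b x : x \in Gm b -> x \in Sb b.
Proof. by case: b; [apply: G1S | apply: G2S]. Qed.

Lemma Sb_disj b x : x \in Sb b -> x \in Sb (~~ b) -> False.
Proof. by case: b => /= h1 h2; [apply: (S_disj h1 h2) | apply: (S_disj h2 h1)]. Qed.

Lemma Gm_disj b x : x \in Gm b -> x \in Gm (~~ b) -> False.
Proof. by move=> /GmS h1 /GmS h2; apply: (Sb_disj h1 h2). Qed.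

Lemma Gm_W b x : x \in Gm b -> x \in W.
Proof. by case: b => h; rewrite /V0 inE h ?orbT. Qed.

Lemma W_Gm b x : x \in W -> x \notin Gm b -> x \in Gm (~~ b).
Proof. by rewrite /V0 inE; case: b => /= /orP[] ->. Qed.

Lemma card_split (A : {set T}) : #|A| = (#|A :&: S1| + #|A :&: S2|)%N.
Proof.
rewrite -(cardsID S1 A); congr (_ + _)%N; apply: eq_card => x; rewrite !inE.
case: (x \in A) => //=; case h1: (x \in S1); case h2: (x \in S2) => //=.
- by case: (S_disj h1 h2).
- by move: (S_cov x); rewrite h1 h2.
Qed.

Lemma card_splitb (A : {set T}) b : #|A| = (#|A :&: Sb b| + #|A :&: Sb (~~ b)|)%N.
Proof. by rewrite card_split; case: b => //=; rewrite addnC. Qed.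

Lemma r_ge0 : (0 <= r)%R.
Proof.
case: Hopt => [[C [_ hc]] _].
have : (0 < #|G1|)%N by lia.
rewrite card_gt0 => /set0Pn [x _].
case: (hc x) => c _ h; exact: le_trans (d0 x c) h.
Qed.

Lemma adjE p q : adjx p q =
  ((p \in G1) && (q \in G2) || (p \in G2) && (q \in G1)) && (d p q <= 3 * r)%R.
Proof. by []. Qed.

Lemma adj_sym p q : adjx p q = adjx q p.
Proof. by rewrite !adjE dsym; congr (_ && _); case: (p \in G1); case: (p \in G2); case: (q \in G1); case: (q \in G2). Qed.

Lemma adj_d p q : adjx p q -> (d p q <= 3 * r)%R.
Proof. by rewrite adjE => /andP[]. Qed.

Lemma adj_side b p q : adjx p q -> p \in Gm b -> q \in Gm (~~ b).
Proof.
rewrite adjE => /andP[h _]; case: b => /= hp; move: h.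
- by case/orP => /andP[] // h1 h2; case: (Gm_disj (b := true) hp h1).
- by case/orP => /andP[] // h1 h2; case: (Gm_disj (b := true) h1 hp).
Qed.

Lemma adj_W p q : adjx p q -> (p \in W) && (q \in W).
Proof. rewrite adjE /V0 !inE; case: (p \in G1); case: (p \in G2); case: (q \in G1); case: (q \in G2); rewrite //= ?andbF //; by case/andP. Qed.

Lemma adj_cover b p q : adjx p q -> (p \in Gm b) || (q \in Gm b).
Proof. by rewrite adjE => /andP[h _]; case: b => /=; case/orP: h => /andP[h1 h2]; rewrite ?h1 ?h2 ?orbT. Qed.

Lemma no_tri v p q : adjx v p -> adjx v q -> adjx p q -> False.
Proof.
move=> hvp hvq hpq.
have hv : v \in Gm (v \in G1).
  case hg: (v \in G1) => //=; move/adj_W: hvp => /andP[]; rewrite /V0 inE hg /= => -> //.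
have hp := adj_side hvp hv; have hq := adj_side hvq hv.
have := adj_side hpq hp; rewrite negbK => hq'.
exact: Gm_disj hq' hq.
Qed.

Lemma close_adj x y : x \in W -> y \in W -> x != y -> (d x y <= 2 * r)%R -> adjx x y.
Proof.
move=> xW yW nxy hd.
have h3 : (d x y <= 3 * r)%R by have := r_ge0; lra.
rewrite adjE h3 andbT.
move: xW yW; rewrite /V0 !inE.
case hx1: (x \in G1); case hx2: (x \in G2); case hy1: (y \in G1); case hy2: (y \in G2) => //= _ _;
  try (move: HI1; rewrite /indep_center_set => -[_ h _]; have := h x y hx1 hy1 nxy; lra);
  try (move: HI2; rewrite /indep_center_set => -[_ h _]; have := h x y hx2 hy2 nxy; lra).
Qed.

Lemma Z_W x : x \in Z -> x \in W.
Proof. by rewrite /Z0 inE => /andP[]. Qed.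

Lemma Z_noadj x y : x \in Z -> adjx x y -> False.
Proof.
rewrite /Z0 inE => /andP[_ /eqP h] hxy.
have : y \in nb W x by rewrite /nbr inE hxy andbT; case/andP: (adj_W hxy).
by rewrite h inE.
Qed.


Lemma key b : (#|Z :|: Gm b| <= K)%N.
Proof.
case: Hopt => [[Cs [[hf1 hf2] hcov]] _].
pose f x := odflt x [pick c in Cs | (d x c <= r)%R].
have hf x : (f x \in Cs) && (d x (f x) <= r)%R.
  rewrite /f; case: pickP => [c /andP[-> ->] // | none].
  case: (hcov x) => c cC hc; by move: (none c); rewrite cC hc.
have inj : {in Z :|: Gm b &, injective f}.
  move=> x y hx hy hfxy; apply/eqP; apply/negPn/negP => nxy.
  have hd : (d x y <= 2 * r)%R.
    move/andP: (hf x) => [_ hx']; move/andP: (hf y) => [_ hy'].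
    rewrite hfxy in hx'; have := dtri x (f y) y; rewrite [d (f y) y]dsym; lra.
  have xW : x \in W by move: hx; rewrite inE => /orP[/Z_W|/Gm_W].
  have yW : y \in W by move: hy; rewrite inE => /orP[/Z_W|/Gm_W].
  have hadj := close_adj xW yW nxy hd.
  move: hx hy; rewrite !in_setU => /orP[hx|hx] /orP[hy|hy].
  - exact: Z_noadj hx hadj.
  - exact: Z_noadj hx hadj.
  - by rewrite adj_sym in hadj; exact: Z_noadj hy hadj.
  - exact: Gm_disj hy (adj_side hadj hx).
rewrite -(card_in_imset inj).
apply: (@leq_trans #|Cs|).
  apply: subset_leq_card; apply/subsetP => _ /imsetP[x _ ->]; by case/andP: (hf x).
rewrite card_split; lia.
Qed.

Lemma Gm_le b : (#|Gm b| <= K)%N.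
Proof. apply: leq_trans (key b); apply: subset_leq_card; exact: subsetUr. Qed.

Lemma W_le : (#|W| <= 2 * K)%N.
Proof. have := cardsU_le G1 G2; have := Gm_le true; have := Gm_le false; rewrite /V0 /=; lia. Qed.

Definition I2 (V : {set T}) := forall v, v \in V -> exists2 u, u \in V & adjx v u.

Lemma deg1P V v : (v \in deg1 d r G1 G2 V) = (v \in V) && (#|nb V v| == 1%N).
Proof. by rewrite /deg1 inE. Qed.

Lemma nbP V v u : (u \in nb V v) = (u \in V) && adjx v u.
Proof. by rewrite /nbr inE. Qed.

Lemma N1P V v u : (u \in N1 d r G1 G2 V v) = (u \in nb V v) && (u \in deg1 d r G1 G2 V).
Proof. by rewrite /N1 inE. Qed.

Lemma two_nb V v : I2 V -> v \in V -> v \notin deg1 d r G1 G2 V ->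
  exists a b, [/\ a \in V, b \in V, adjx v a, adjx v b & a != b].
Proof.
move=> hI vV hv.
have hdeg : (1 < #|nb V v|)%N.
  case: (hI v vV) => u uV huv.
  have h0 : (0 < #|nb V v|)%N by rewrite card_gt0; apply/set0Pn; exists u; rewrite nbP uV huv.
  have h1 : #|nb V v| != 1%N by apply/negP => h1; move: hv; rewrite deg1P vV h1.
  by move: h0 h1; case: #|nb V v| => [|[|]].
case/card_gt1P: hdeg => a [b [ha hb hab]].
move: ha hb; rewrite !nbP => /andP[aV hva] /andP[bV hvb].
by exists a, b.
Qed.

Lemma body_props C V C' V' m : body d r G1 G2 C V C' V' m -> I2 V ->
  exists x X, [/\ C' = x |: C, V' = V :\: X, x \in V & x \in X] /\
    [/\ m = (1 + inc_edges d r G1 G2 V X)%N,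
     exists y z, [/\ y \in V, z \in V, y \in X, z \in X & adjx y z],
     (forall u, u \in X -> u \in V -> (d u x <= 3 * r)%R) & I2 (V :\: X)].
Proof.
case => {C V C' V' m} [C V p q h0 pV qV hpq | C V i hd iV hmax] hI.
- exists p, [set p; q]; split; first by split => //; rewrite !inE eqxx.
  split => //.
  + by exists p, q; rewrite !inE !eqxx ?orbT; split.
  + move=> u; rewrite !inE => /orP[/eqP-> _|/eqP-> _].
      by rewrite dxx; have:= r_ge0; lra.
    by rewrite dsym; exact: adj_d.
  + move=> v; rewrite !inE => /andP[hv vV].
    have hnd : v \notin deg1 d r G1 G2 V by rewrite h0 inE.
    case: (two_nb hI vV hnd) => a [b [aV bV hva hvb hab]].
    case ha': ((a == p) || (a == q)); last by exists a; rewrite // !inE ha' aV.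
    case hb': ((b == p) || (b == q)); last by exists b; rewrite // !inE hb' bV.
    exfalso.
    move/orP: ha' => [/eqP ea|/eqP ea]; move/orP: hb' => [/eqP eb|/eqP eb]; subst.
    * by rewrite eqxx in hab.
    * exact: no_tri hva hvb hpq.
    * by apply: no_tri hva hvb _; rewrite adj_sym.
    * by rewrite eqxx in hab.
- have [u uN] : exists u, u \in N1 d r G1 G2 V i.
    case/set0Pn: hd => v; rewrite deg1P => /andP[vV hv1].
    case/cards1P: (hv1) => w hw.
    have : w \in nb V v by rewrite hw set11.
    rewrite nbP => /andP[wV hvw].
    have : (0 < #|N1 d r G1 G2 V w|)%N.
      rewrite card_gt0; apply/set0Pn; exists v.
      by rewrite N1P nbP vV adj_sym hvw deg1P vV hv1.
    move=> h; have := leq_trans h (hmax w wV).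
    by rewrite card_gt0 => /set0Pn.
  have uV : u \in V by move: uN; rewrite N1P nbP => /andP[/andP[]].
  have hiu : adjx i u by move: uN; rewrite N1P nbP => /andP[/andP[]].
  exists i, (i |: N1 d r G1 G2 V i); split; first by split => //; rewrite setU11.
  split => //.
  + by exists i, u; rewrite setU11 (setU1r _ uN); split.
  + move=> w /setU1P[->|wN] _.
      by rewrite dxx; have:= r_ge0; lra.
    have : adjx i w by move: wN; rewrite N1P nbP => /andP[/andP[]].
    by rewrite dsym; exact: adj_d.
  + move=> v; rewrite inE => /andP[hv vV].
    case: (hI v vV) => w wV hvw.
    case wX: (w \in i |: N1 d r G1 G2 V i); last by exists w; rewrite // inE wX wV.
    move/setU1P: wX => [ew | wN].
    * subst w.
      have hnd : v \notin deg1 d r G1 G2 V.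
        apply/negP => hv1; move: hv; rewrite in_setU1 N1P nbP vV adj_sym hvw hv1.
        by rewrite orbT.
      case: (two_nb hI vV hnd) => a [b [aV bV hva hvb hab]].
      have [c [cV hvc ci]] : exists c, [/\ c \in V, adjx v c & c != i].
        case: (eqVneq a i) => [ea|nai]; last by exists a.
        by exists b; split => //; rewrite -ea eq_sym.
      exists c => //; rewrite in_setD in_setU1 cV andbT negb_or ci /=.
      apply/negP; rewrite N1P nbP => /andP[/andP[_ hic] _].
      exact: no_tri hvw hvc hic.
    * exfalso; move: (wN); rewrite N1P => /andP[_]; rewrite deg1P => /andP[_ /cards1P[t ht]].
      have h1 : i \in nb V w by rewrite nbP iV adj_sym; move: wN; rewrite N1P nbP => /andP[/andP[]].
      have h2 : v \in nb V w by rewrite nbP vV adj_sym.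
      move: h1 h2; rewrite ht !inE => /eqP ei /eqP ev.
      by move: hv; rewrite ev -ei setU11.
Qed.

Definition init_cost := (#|G1| * #|G2| + #|W| + 1)%N.
Definition B2 := (init_cost + #|W| * (#|W| + 1) + #|W| + 1 + #|W| * (#|W| + 2))%N.

Definition Inv (st : astate T) : Prop :=
 match st with
 | Ph1 C P n => [/\ C :&: P = set0, C :|: P = Z & (n <= init_cost + #|C| * (#|W| + 1))%N]
 | Ph2 C V n => [/\ V \subset W, (forall b, #|C| + #|V :&: Gm b| <= K)%N,
     (forall b, ~~ ret_cond S1 S2 k1 k2 G1 G2 C V b) & I2 V] /\
     ((forall x, x \in W -> x \notin V -> exists2 c, c \in C & (d x c <= 3 * r)%R)
     /\ (n + #|V| * (#|W| + 2) <= B2)%N)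
 | Done C n => [/\ fair_feasible S1 S2 k1 k2 C, (#|C| <= K)%N,
     (forall s, exists2 x, x \in C & (d s x <= 5 * r)%R) & (n <= 100 * K ^ 2)%N]
 end.

Lemma body_next C V n C' V' m : Inv (Ph2 C V n) -> body d r G1 G2 C V C' V' m ->
  [/\ V' \subset W, (forall b, #|C'| + #|V' :&: Gm b| <= K)%N, I2 V' &
     (forall x, x \in W -> x \notin V' -> exists2 c, c \in C' & (d x c <= 3 * r)%R)]
  /\ ((n + m + 1 + #|V'| * (#|W| + 2) <= B2)%N
  /\ (forall b, #|C' :&: Sb b| <= #|C :&: Sb b| + 1)%N).
Proof.
move=> [[VW I3 I4 hI] [I5 hc]] hb.
case: (body_props hb hI) => x [X [[-> -> xV xX] [-> [y [z [yV zV yX zX hyz]]] hd hI']]].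
split; [split | split].
- exact: subset_trans (subsetDl V X) VW.
- move=> b.
  have h1 : (#|x |: C| <= #|C| + 1)%N by rewrite cardsU1; have := leq_b1 (x \notin C); lia.
  have [w [wV wX wG]] : exists w, [/\ w \in V, w \in X & w \in Gm b].
    by case/orP: (adj_cover b hyz) => h; [exists y | exists z].
  have h2 : (#|(V :&: Gm b) :\: X| < #|V :&: Gm b|)%N.
    by apply: (cardD_lt (x := w)); rewrite // inE wV wG.
  have e : (V :\: X) :&: Gm b = (V :&: Gm b) :\: X.
    by apply/setP => t; rewrite !inE; case: (t \in X); case: (t \in V).
  have := I3 b; rewrite e; lia.
- exact: hI'.
- move=> t tW; rewrite in_setD negb_and negbK => /orP[tX|tV].
    case tV: (t \in V); last by case: (I5 t tW (negbT tV)) => c cC hc'; exists c; rewrite // setU1r.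
    by exists x; [rewrite setU11 | exact: hd].
  by case: (I5 t tW tV) => c cC hc'; exists c; rewrite // setU1r.
- have hinc : (inc_edges d r G1 G2 V X <= #|V :&: X| * #|V|)%N.
    rewrite /inc_edges -cardsX; apply: subset_leq_card; apply/subsetP => -[e1 e2].
    by rewrite !inE /= => /and4P[-> -> -> _].
  have hVW : (#|V| <= #|W|)%N by exact: subset_leq_card.
  have hsplit := cardsID X V.
  have hpos : (0 < #|V :&: X|)%N by rewrite card_gt0; apply/set0Pn; exists x; rewrite inE xV.
  have hm : (#|V :&: X| * #|V| <= #|V :&: X| * #|W|)%N by rewrite leq_mul2l hVW orbT.
  move: hc; rewrite -hsplit mulnDl !mulnDr; nia.
- move=> b; rewrite setIUl; apply: leq_trans (cardsU_le _ _) _; rewrite addnC leq_add2l.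
  by apply: leq_trans (subset_leq_card (subsetIl _ _)) _; rewrite cards1.
Qed.

Lemma kk_lt b : (kk k1 k2 b < #|Gm b|)%N. Proof. by case: b. Qed.
Lemma kk_sum b : (kk k1 k2 b + kk k1 k2 (~~ b))%N = K. Proof. by case: b => //=; rewrite addnC. Qed.

Lemma Z_Sb b : Z :&: Sb b = Gm b :&: Z.
Proof.
apply/setP => t; rewrite !in_setI; case tZ: (t \in Z); rewrite ?andbF ?andbT //.
have tW := Z_W tZ.
case tG: (t \in Gm b); first by rewrite (GmS tG).
apply/negbTE/negP => tS.
exact: Sb_disj tS (GmS (W_Gm tW (negbT tG))).
Qed.

Lemma step_inv s t : Inv s -> algA_step d S1 S2 k1 k2 r G1 G2 s t -> Inv t.
Proof.
move=> hs hst; case: hst hs => {s t}.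
- move=> C P n i hiP hf [hCP hCU hn].
  have hdisj u : u \in C -> u \in P -> False.
    move=> a b; have : u \in C :&: P by rewrite inE a b.
    by rewrite hCP inE.
  have iC : i \notin C by apply/negP => iC; exact: hdisj iC hiP.
  have CZ : (#|C| <= #|W|)%N.
    apply: (@leq_trans #|Z|); apply: subset_leq_card.
      by rewrite -hCU subsetUl.
    by apply/subsetP => u /Z_W.
  split.
  + apply/setP => u; rewrite !inE; case: (eqVneq u i) => [->|ne] /=; rewrite ?eqxx /= ?andbF //.
    case uC: (u \in C); case uP: (u \in P) => //=; rewrite ?andbT ?andbF //; try (exfalso; exact: hdisj uC uP).
  + apply/setP => u; rewrite -hCU !inE; case: (eqVneq u i) => [->|ne] /=; by rewrite ?hiP ?orbT.
  + rewrite cardsU1 iC /=; move: hn; nia.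
- move=> C P n i hiP hf [hCP hCU hn]; exfalso.
  move: hf; rewrite negb_forall_in => /existsP[c /andP[cC hc]].
  rewrite -leNgt in hc.
  have cZ : c \in Z by rewrite -hCU inE cC.
  have iZ : i \in Z by rewrite -hCU inE hiP orbT.
  have nci : c != i.
    apply/negP => /eqP e; have : c \in C :&: P by rewrite inE cC e hiP.
    by rewrite hCP inE.
  exact: Z_noadj cZ (close_adj (Z_W cZ) (Z_W iZ) nci hc).
- move=> C n [_ hCU hn]; rewrite setU0 in hCU; subst C.
  have hZW : (#|Z| <= #|W|)%N by apply: subset_leq_card; apply/subsetP => u /Z_W.
  have hDW : (#|W :\: Z| <= #|W|)%N by apply: subset_leq_card; exact: subsetDl.
  have eWG b : (W :\: Z) :&: Gm b = Gm b :\: Z.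
    apply/setP => u; rewrite in_setI !in_setD; case uG: (u \in Gm b); rewrite ?andbT ?andbF //.
    by rewrite (Gm_W uG) andbT.
  split; [split | split].
  + exact: subsetDl.
  + move=> b; rewrite eWG; have := key b; rewrite cardsU -(cardsID Z (Gm b)) setIC; lia.
  + move=> b; rewrite /ret_cond Z_Sb eWG cardsID -ltnNge; exact: kk_lt.
  + move=> v; rewrite in_setD => /andP[vZ vW].
    have : nb W v != set0 by move: vZ; rewrite /Z0 inE vW.
    case/set0Pn => u; rewrite nbP => /andP[uW hvu].
    exists u => //; rewrite in_setD uW andbT; apply/negP => uZ.
    by apply: (Z_noadj (y := v) uZ); rewrite adj_sym.
  + move=> u uW; rewrite in_setD uW andbT negbK => uZ.
    by exists u; rewrite // dxx; have := r_ge0; lra.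
  + rewrite /B2; move: hn; have : (#|Z| * (#|W| + 1) <= #|W| * (#|W| + 1))%N by rewrite leq_mul2r hZW orbT.
    have : (#|W :\: Z| * (#|W| + 2) <= #|W| * (#|W| + 2))%N by rewrite leq_mul2r hDW orbT.
    lia.
- move=> C V n hstop [[VW I3 I4 hI] _]; exfalso.
  have hC : (#|C| <= K)%N by have := I3 true; lia.
  move: hstop; rewrite hC /= negbK => /eqP hV; subst V.
  have := I4 true; have := I4 false; rewrite /ret_cond !set0I !cards0 /= !addn0 -!ltnNge.
  have := card_split C; lia.
- move=> C V n C' V' m l hK hV hb hret hs.
  have [[V'W I3' hI' I5'] [hc' hSb]] := body_next hs hb.
  case: hs => [[VW I3 I4 hI] _].
  have hout : ret_set d r G1 G2 C' V' l = C' :|: (V' :&: Gm l).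
    rewrite /ret_set; apply/setP => t; rewrite in_setU.
    case tC: (t \in C' :|: V' :&: Gm l) => //=.
    rewrite inE; apply/negbTE/negP => /andP[/setIP[tV tG] /forall_inP hall].
    case: (hI' t tV) => u uV htu.
    have uG := adj_side htu tG; rewrite negbK in uG.
    have := hall u; rewrite !inE uV uG orbT => /(_ isT).
    have := adj_d htu; lra.
  rewrite hout.
  have hfeas b : (#|(C' :|: V' :&: Gm l) :&: Sb b| <= kk k1 k2 b)%N.
    case: (eqVneq b l) => [->|nbl].
      rewrite setIUl; apply: leq_trans (cardsU_le _ _) _.
      have := subset_leq_card (subsetIl (V' :&: Gm l) (Sb l)).
      by move: hret; rewrite /ret_cond; lia.
    have -> : b = ~~ l by move: nbl; clear; case: b; case: l.
    have -> : (C' :|: V' :&: Gm l) :&: Sb (~~ l) = C' :&: Sb (~~ l).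
      rewrite setIUl; apply/setP => u; rewrite in_setU; case: (u \in C' :&: Sb (~~ l)) => //=.
      rewrite !inE; apply/negP => /andP[/andP[_ uG] uS].
      exact: Sb_disj (GmS uG) uS.
    have := hSb (~~ l); have := card_splitb C l; have := I3 l; have := I4 l.
    rewrite /ret_cond -ltnNge; have := kk_sum l; lia.
  split.
  + by split; [exact: hfeas true | exact: hfeas false].
  + by rewrite card_split; have := hfeas true; have := hfeas false; simpl; lia.
  + move=> s.
    have [p pG hsp] : exists2 p, p \in Gm (s \in S1) & (d s p <= 2 * r)%R.
      case hs: (s \in S1).
        by move: HI1; rewrite /indep_center_set => -[_ _ h]; exact: h.
      have hs2 : s \in S2 by move: (S_cov s); rewrite hs.
      by move: HI2; rewrite /indep_center_set => -[_ _ h]; exact: h.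
    have pW := Gm_W pG.
    have [c cO hpc] : exists2 c, c \in C' :|: V' :&: Gm l & (d p c <= 3 * r)%R.
      case pV: (p \in V'); last first.
        by case: (I5' p pW (negbT pV)) => c cC hc; exists c; rewrite // inE cC.
      case pl: (p \in Gm l).
        by exists p; rewrite ?dxx ?inE ?pV ?pl ?orbT //; have := r_ge0; lra.
      case: (hI' p pV) => u uV hpu.
      have uG := adj_side hpu (W_Gm pW (negbT pl)); rewrite negbK in uG.
      by exists u; [rewrite !inE uV uG orbT | exact: adj_d].
    by exists c => //; have := dtri s p c; lra.
  + have hCK : (#|C'| <= K)%N by have := I3' true; lia.
    have hVW : (#|V'| <= #|W|)%N by exact: subset_leq_card.
    have hW := W_le; have hg1 := Gm_le true; have hg2 := Gm_le false; simpl in hg1, hg2.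
    have hK1 : (1 <= K)%N by lia.
    have h1 : (#|V'| * (#|C'| + #|V'| + 1) <= #|W| * (K + #|W| + 1))%N.
      by apply: leq_mul => //; lia.
    have h2 : (#|G1| * #|G2| <= K * K)%N by apply: leq_mul.
    have h3 : (#|W| * #|W| <= (2 * K) * (2 * K))%N by apply: leq_mul.
    have h4 : (#|W| * K <= (2 * K) * K)%N by apply: leq_mul.
    move: hc'; rewrite /B2 /init_cost; nia.
- move=> C V n C' V' m hK hV hb hr1 hr2 hs.
  have [[V'W I3' hI' I5'] [hc' hSb]] := body_next hs hb.
  by split; [split => // -[] | split].
Qed.

Lemma progress st : Inv st ->
  (exists C n, st = Done C n) \/ exists st', algA_step d S1 S2 k1 k2 r G1 G2 st st'.
Proof.
case: st => [C P n | C V n | C n] hinv; [right | right | left; by exists C, n].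
- have [->|/set0Pn[i iP]] := eqVneq P set0; first by eexists; exact: ph1_end.
  case hf: [forall c in C, (2 * r < d c i)%R].
    by eexists; exact: ph1_add iP hf.
  by eexists; apply: ph1_skip iP _; rewrite hf.
- case hc: ((#|C| <= K)%N && (V != set0)); last by eexists; apply: ph2_stop; rewrite hc.
  move/andP: hc => [hK hV].
  have [C' [V' [m hb]]] : exists C' V' m, body d r G1 G2 C V C' V' m.
    case: hinv => [[VW _ _ hI] _].
    case/set0Pn: (hV) => v vV.
    have [h0|hd] := eqVneq (deg1 d r G1 G2 V) set0.
      case: (hI v vV) => u uV hvu.
      by do 3 eexists; apply: body_edge h0 vV uV hvu.
    case: (@arg_maxnP _ v (fun i => i \in V) (fun i => #|N1 d r G1 G2 V i|) vV) => i iV imax.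
    by do 3 eexists; apply: body_deg1 hd iV _ => j jV; exact: imax.
  case r1: (ret_cond S1 S2 k1 k2 G1 G2 C' V' true).
    by eexists; exact: ph2_return hK hV hb r1.
  case r2: (ret_cond S1 S2 k1 k2 G1 G2 C' V' false).
    by eexists; exact: ph2_return hK hV hb r2.
  by eexists; apply: ph2_continue hK hV hb _ _; rewrite ?r1 ?r2.
Qed.

Lemma reach_inv s u : algA_reach (algA_step d S1 S2 k1 k2 r G1 G2) s u -> Inv s -> Inv u.
Proof.
elim => // s0 t u0 hst _ IH hs; apply: IH; exact: step_inv hs hst.
Qed.

Lemma init_inv : Inv (algA_init d r G1 G2).
Proof. by split; rewrite ?set0I ?set0U // cards0 /init_cost; lia. Qed.

Lemma main_sec :
  let step := algA_step d S1 S2 k1 k2 r G1 G2 in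
  let init := algA_init d r G1 G2 in
  (forall st, algA_reach step init st ->
       (exists C n, st = Done C n) \/ (exists st', step st st')) /\
  (forall C n, algA_reach step init (Done C n) ->
       [/\ fair_feasible S1 S2 k1 k2 C, (#|C| <= k1 + k2)%N,
           (forall s : T, exists2 x, x \in C & (d s x <= 5 * r)%R)
         & (n <= 100 * (k1 + k2) ^ 2)%N]).
Proof.
move=> step init; split.
- move=> st hr; apply: progress; exact: reach_inv hr init_inv.
- move=> C n hr; exact: (reach_inv hr init_inv).
Qed.

End Pf.

Definition mu (T : finType) (st : astate T) : nat :=
  match st with
  | Ph1 _ P _ => (#|P| + #|T| + 2)%N
  | Ph2 _ V _ => (#|V| + 1)%N
  | Done _ _ => 0%N
  end.

Lemma body_dec (R : realType) (T : finType) (d : T -> T -> R) r G1 G2 C V C' V' m :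
  body d r G1 G2 C V C' V' m -> (#|V'| < #|V|)%N.
Proof.
case => {C V C' V' m} [C V p q _ pV _ _ | C V i _ iV _].
- by apply: (cardD_lt (x := p)); rewrite // !inE eqxx.
- by apply: (cardD_lt (x := i)); rewrite // setU11.
Qed.

Lemma step_dec (R : realType) (T : finType) (d : T -> T -> R) S1 S2 k1 k2 r G1 G2 s t :
  algA_step d S1 S2 k1 k2 r G1 G2 s t -> (mu t < mu s)%N.
Proof.
case => {s t} /=.
- by move=> C P n i iP _; rewrite (cardsD1 i P) iP /=; lia.
- by move=> C P n i iP _; rewrite (cardsD1 i P) iP /=; lia.
- move=> C n; rewrite cards0; have h : (#|V0 G1 G2 :\: Z0 d r G1 G2| <= #|T|)%N by apply: max_card. by rewrite add0n addn1 addn2 !ltnS.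
- by move=> *; lia.
- by move=> *; lia.
- by move=> C V n C' V' m _ _ hb _ _; have := body_dec hb; lia.
Qed.

Lemma acc_all (R : realType) (T : finType) (d : T -> T -> R) S1 S2 k1 k2 r G1 G2 s :
  Acc (fun y x => algA_step d S1 S2 k1 k2 r G1 G2 x y) s.
Proof.
suff H : forall k s, (mu s < k)%N -> Acc (fun y x => algA_step d S1 S2 k1 k2 r G1 G2 x y) s.
  exact: (H (mu s).+1).
elim => [|k IH] s0 hs; first by [].
constructor => t hst; apply: IH; have := step_dec hst; lia.
Qed.




Local Open Scope ring_scope.

Theorem theorem2 :
  exists c : nat,
  forall (R : realType) (T : finType) (d : T -> T -> R)
         (S1 S2 : {set T}) (k1 k2 : nat) (r : R) (G1 G2 : {set T}),
    is_metric d ->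
    S1 :&: S2 = set0 -> S1 :|: S2 = [set: T] ->
    opt_radius d S1 S2 k1 k2 r ->
    indep_center_set d (2 * r) S1 G1 ->
    indep_center_set d (2 * r) S2 G2 ->
    (k1 < #|G1|)%N -> (k2 < #|G2|)%N ->
    let step := algA_step d S1 S2 k1 k2 r G1 G2 in
    let init := algA_init d r G1 G2 in
    (* termination: no infinite run, and no run gets stuck *)
    Acc (fun y x => step x y) init /\
    (forall st, algA_reach step init st ->
       (exists C n, st = Done C n) \/ (exists st', step st st')) /\
    (* every run's output is feasible, 5r*-covering, and took O(k^2) time *)
    (forall C n, algA_reach step init (Done C n) ->
       [/\ fair_feasible S1 S2 k1 k2 C, (#|C| <= k1 + k2)%N,
           (forall s : T, exists2 x, x \in C & d s x <= 5 * r)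
         & (n <= c * (k1 + k2) ^ 2)%N]).
Proof.
exists 100%N => R T d S1 S2 k1 k2 r G1 G2 Hm HS12 HSU Hopt HI1 HI2 Hk1 Hk2 step init.
split; first exact: acc_all.
exact: (main_sec Hm HS12 HSU Hopt HI1 HI2 Hk1 Hk2).
Qed.
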